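(* Let $n\ge 1$ and let $E,F$ be tagged edges of the punctured $(n,\infty)$-gon $\mathcal{P}_{n,\infty}$. Then $(E,F)$ is an elementary move if and only if $(\tau F, E)$ is an elementary move.
   Context: $\mathcal{P}_{n,\infty}$: the closed unit disk $D\subset\mathbb{R}^2$ with a puncture (marked point) at the origin and boundary marked points labeled $(h,a)$, $h\in\{1,\dots,n\}$, $a\in\mathbb{Z}$, arranged on $\partial D$ so that, going counterclockwise, the points of block $h$ appear in increasing order of $a$, the blocks appear in the cyclic order $1,2,\dots,n$, and the marked points accumulate from both sides exactly at $n$ unmarked points $a_1,\dots,a_n\in\partial D$, with $a_h$ lying between block $h$ and block $h+1$ (indices mod $n$); there are no one-sided accumulation points. For a boundary marked point $P=(h,a)$ write $P^+=(h,a+1)$, $P^-=(h,a-1)$, $P^{++}=(h,a+2)$. Tagged edges: for each ordered pair of distinct boundary marked points $P\neq Q$ with $Q\neq P^+$, the edge $E_{P,Q}$ is the homotopy class (in $D$ minus the puncture, relative endpoints) of a non-self-crossing path from $P$ to $Q$ through the interior of $D$ minus the puncture, homotopic to the counterclockwise boundary path from $P$ to $Q$; and for each boundary marked point $P$ there are two tagged edges $E^{+1}_{P,P}$ and $E^{-1}_{P,P}$, each drawn as the segment from $P$ to the puncture (tagged if the sign is $-1$). Translation: $\tau(E_{P,Q})=E_{P^+,Q^+}$ for $P\neq Q$, and $\tau(E^{\epsilon}_{P,P})=E^{-\epsilon}_{P^+,P^+}$. Elementary move: a pair $(E,F)$ of distinct tagged edges such that one of the following holds, with $P=(h_1,a_1)$,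 $Q=(k_1,b_1)$: (i) if $E=E_{P,Q}$ with $Q=P^{++}$, then $F=E_{P^-,Q}$; (ii) if $E=E_{P,Q}$ with $h_1\ne k_1$, or with $h_1=k_1$ and $Q$ lying (in the cyclic order starting at $P$) at or after $P^{+++}=(h_1,a_1+3)$ and strictly before $P^-$, then $F=E_{P^-,Q}$ or $F=E_{P,Q^-}$; (iii) if $E=E_{P,Q}$ with $Q=P^-$, then $F=E_{P,Q^-}$ or $F=E^{+1}_{Q,Q}$ or $F=E^{-1}_{Q,Q}$; (iv) if $E=E^{\epsilon}_{P,P}$, then $F=E_{P,P^-}$. *)

(* Defs.v *)
From mathcomp Require Import all_boot.
From Stdlib Require Import ZArith.

Set Implicit Arguments.
Unset Strict Implicit.
Unset Printing Implicit Defensive.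

Local Open Scope Z_scope.

(* Boundary marked point (h,a): block h (blocks 1..n indexed here by 'I_n,
   i.e. 0-based; only equality of blocks and their cyclic order matter), a : Z. *)
Definition bpoint (n : nat) : Type := ('I_n * Z)%type.

(* (h,a) |-> (h,a+k);  P^+ = shift P 1, P^- = shift P (-1), P^{++} = shift P 2 *)
Definition shift {n : nat} (P : bpoint n) (k : Z) : bpoint n := (P.1, P.2 + k).

(* Sign of a tag: Pos = +1 (plain), Neg = -1 (tagged). *)
Inductive tsign : Type := Pos | Neg.
Definition sneg (e : tsign) : tsign := match e with Pos => Neg | Neg => Pos end.

(* Raw tagged edges: Arc P Q stands for E_{P,Q} (P <> Q), Tg e P for E^e_{P,P}. *)
Inductive tedge (n : nat) : Type :=
| Arc : bpoint n -> bpoint n -> tedge n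
| Tg  : tsign -> bpoint n -> tedge n.
Arguments Arc {n} _ _.
Arguments Tg {n} _ _.

Definition is_tedge {n : nat} (E : tedge n) : Prop :=
  match E with
  | Arc P Q => P <> Q /\ Q <> shift P 1
  | Tg _ _ => True
  end.

Definition tau {n : nat} (E : tedge n) : tedge n :=
  match E with
  | Arc P Q => Arc (shift P 1) (shift Q 1)
  | Tg e P => Tg (sneg e) (shift P 1)
  end.

(* Condition of case (ii) for E_{P,Q}, P=(h1,a1), Q=(k1,b1):
   h1 <> k1, or h1 = k1 and Q lies, in the counterclockwise cyclic order starting
   at P, at or after P^{+++} and strictly before P^-.  Going counterclockwise from
   P = (h1,a1) one meets (h1,a1+1), (h1,a1+2), ... , the other blocks, and then
   (h1,b) for b < a1 in increasing order, ending with P^- = (h1,a1-1). *)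
Definition case_ii_cond {n : nat} (P Q : bpoint n) : Prop :=
  P.1 <> Q.1 \/ (P.1 = Q.1 /\ (P.2 + 3 <= Q.2 \/ Q.2 <= P.2 - 2)).

Definition elem_move {n : nat} (E F : tedge n) : Prop :=
  E <> F /\
  match E with
  | Arc P Q =>
      (Q = shift P 2 /\ F = Arc (shift P (-1)) Q)
   \/ (case_ii_cond P Q /\
        (F = Arc (shift P (-1)) Q \/ F = Arc P (shift Q (-1))))
   \/ (Q = shift P (-1) /\
        (F = Arc P (shift Q (-1)) \/ F = Tg Pos Q \/ F = Tg Neg Q))
  | Tg e P =>
      F = Arc P (shift P (-1))
  end.

(* Main.v *)
Require Import Defs.
From Stdlib Require Import ZArith Lia Setoid.
From mathcomp Require Import all_boot.

Local Open Scope Z_scope.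

Definition tz (e : tsign) : Z := match e with Pos => 0 | Neg => 1 end.

Lemma arc_eq n (X Y Z W : bpoint n) : Arc X Y = Arc Z W <-> X = Z /\ Y = W.
Proof. split; [intro H; inversion H; auto | intros [-> ->]; auto]. Qed.
Lemma tg_eq n e e' (X Y : bpoint n) : Tg e X = Tg e' Y <-> tz e = tz e' /\ X = Y.
Proof.
  split; [intro H; inversion H; auto|].
  intros [H ->]; destruct e, e'; simpl in H; try discriminate; auto.
Qed.
Lemma arc_tg n e (X Y Z : bpoint n) : Arc X Y = Tg e Z <-> False.
Proof. split; [discriminate|tauto]. Qed.
Lemma tg_arc n e (X Y Z : bpoint n) : Tg e Z = Arc X Y <-> False.
Proof. split; [discriminate|tauto]. Qed.
Lemma pair_eq n (a c : 'I_n) (b d : Z) : (a, b) = (c, d) <-> Z.of_nat a = Z.of_nat c /\ b = d.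
Proof.
  split; [intro H; inversion H; auto|].
  intros [H ->]; f_equal; apply: val_inj; simpl; lia.
Qed.
Lemma ord_eq n (a c : 'I_n) : a = c <-> Z.of_nat a = Z.of_nat c.
Proof. split; [intros ->; auto| intro H; apply: val_inj; simpl; lia]. Qed.
Lemma tz_sneg e : tz (sneg e) = 1 - tz e.
Proof. by destruct e. Qed.

Theorem lemma4p1 (n : nat) (hn : (0 < n)%N) (E F : tedge n) :
  is_tedge E -> is_tedge F ->
  (elem_move E F <-> elem_move (tau F) E).
Proof.
  destruct E as [[p1 p2] [q1 q2] | e [p1 p2]];
  destruct F as [[r1 r2] [s1 s2] | f [r1 r2]];
  unfold is_tedge, elem_move, tau, case_ii_cond, shift; cbn;
  rewrite ?arc_eq ?tg_eq ?arc_tg ?tg_arc ?pair_eq ?ord_eq ?tz_sneg;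
  intros H1 H2;
  rewrite ?arc_eq ?tg_eq ?arc_tg ?tg_arc ?pair_eq ?ord_eq ?tz_sneg in H1 H2;
  try (destruct e); try (destruct f); cbn in *;
  try (destruct e); try (destruct f); cbn in *;
  generalize dependent (Z.of_nat p1); try generalize dependent (Z.of_nat q1);
  try generalize dependent (Z.of_nat r1); try generalize dependent (Z.of_nat s1);
  intros; split; intro H; intuition (try subst; lia).
Qed.
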